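(* Let $p\ne q$ be primes, $G=\mathbb{Z}_p^2\times\mathbb{Z}_q^2$, and let $(S,\Lambda)$ be a spectral pair in $G$ with $\gcd(|S|,p^2q^2)=pq$ and $|S|=|\Lambda|>pq$. Then $S_p=qD$, where $D$ is a nonempty subset of $\mathbb{Z}_p^2$ with $D\ne\mathbb{Z}_p^2$ (i.e. $S_p=q\,1_D$).
   Context: Elements of $G$ are written $a+b$ with $a\in\mathbb{Z}_p^2$, $b\in\mathbb{Z}_q^2$. For $w=u+v$ define $\chi_w(a+b)=\exp\big(2\pi i(\tfrac{u\cdot a}{p}+\tfrac{v\cdot b}{q})\big)$ and $\chi(S)=\sum_{s\in S}\chi(s)$. $(S,\Lambda)$ is a spectral pair if $|S|=|\Lambda|$ and $\chi_{\lambda-\lambda'}(S)=0$ for all distinct $\lambda,\lambda'\in\Lambda$. $S_p(a)=\#\{b\in\mathbb{Z}_q^2:a+b\in S\}$ is the projection of $S$ to $\mathbb{Z}_p^2$ as a multiset. *)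

(* Defs.v *)
From mathcomp Require Import all_boot all_algebra.
From mathcomp Require Import reals trigo complex.
Import GRing.Theory Num.Theory.

Set Implicit Arguments.
Unset Strict Implicit.
Unset Printing Implicit Defensive.

Local Open Scope ring_scope.
Local Open Scope complex_scope.

(* Z_n^2 (used with n prime, so n >= 2 and 'Z_n is really Z/nZ) *)
Definition Z2 (n : nat) : Type := ('Z_n * 'Z_n)%type.

(* G = Z_p^2 x Z_q^2 ; an element a + b is the pair (a, b) *)
Definition Gpq (p q : nat) : Type := (Z2 p * Z2 q)%type.

Definition gsub (p q : nat) (x y : Gpq p q) : Gpq p q :=
  (((x.1.1 - y.1.1)%R, (x.1.2 - y.1.2)%R), ((x.2.1 - y.2.1)%R, (x.2.2 - y.2.2)%R)).

Definition dotZ (n : nat) (u a : Z2 n) : nat :=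
  nat_of_ord ((u.1 * a.1 + u.2 * a.2)%R : 'Z_n).

Definition expi (R : realType) (t : R) : R[i] := cos t +i* sin t.

Definition chi (R : realType) (p q : nat) (w x : Gpq p q) : R[i] :=
  expi (2 * pi * ((dotZ w.1 x.1)%:R / p%:R + (dotZ w.2 x.2)%:R / q%:R)).

Definition chiS (R : realType) (p q : nat) (w : Gpq p q) (S : {set Gpq p q}) : R[i] :=
  \sum_(s in S) chi R w s.

Definition spectral_pair (R : realType) (p q : nat) (S L : {set Gpq p q}) : Prop :=
  #|S| = #|L| /\
  forall l l', l \in L -> l' \in L -> l != l' -> chiS R (gsub l l') S = 0.

Definition Sproj (p q : nat) (S : {set Gpq p q}) (a : Z2 p) : nat :=
  #|[set b : Z2 q | (a, b) \in S]|.

(* Main.v *)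
Require Import Defs.
From mathcomp Require Import all_boot all_order all_algebra all_field.
From mathcomp Require Import reals trigo complex.
From mathcomp Require Import ring lra zify.
Import Order.TTheory GRing.Theory Num.Theory.
Set Implicit Arguments.
Unset Strict Implicit.
Unset Printing Implicit Defensive.
Local Open Scope ring_scope.
Lemma cyclo_map (F : fieldType) (n : nat) (z : F) :
  n.-primitive_root z -> map_poly intr 'Phi_n = cyclotomic z n.
Proof.
elim/ltn_ind: n z => n IHn z prim_z.
have n_gt0 := prim_order_gt0 prim_z.
have [uDn _ inDn] := divisors_correct n_gt0.
have E2 := congr1 (map_poly (intr : int -> F)) (prod_Cyclotomic n_gt0).
rewrite rmorph_prod rmorphB rmorph1 /= map_polyXn (prod_cyclotomic prim_z) in E2.
rewrite (big_rem n) ?inDn //= [RHS](big_rem n) ?inDn //= in E2.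
rewrite divnn n_gt0 expr1 in E2.
set Q := \prod_(_ <- _) _ in E2.
have EQ : Q = \prod_(d <- rem n (divisors n)) cyclotomic (z ^+ (n %/ d)) d.
  apply: eq_big_seq => d; rewrite mem_rem_uniq ?inE //= inDn => /andP[n'd ddvn].
  by rewrite (IHn d _ (z ^+ (n %/ d))) ?dvdn_prim_root // ltn_neqAle n'd dvdn_leq.
rewrite -EQ in E2.
have nzQ : Q != 0.
  rewrite EQ; apply/monic_neq0/monic_prod => d _; exact: cyclotomic_monic.
by apply: (mulIf nzQ).
Qed.

Lemma galois_root (F : numFieldType) (n : nat) (z : F) (P : {poly rat}) (j : nat) :
  n.-primitive_root z -> coprime j n ->
  root (map_poly ratr P) z -> root (map_poly ratr P) (z ^+ j).
Proof.
move=> prim_z coj rootP.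
have n_gt0 := prim_order_gt0 prim_z.
pose Phi : {poly rat} := map_poly intr 'Phi_n.
have PhiF : map_poly (ratr : rat -> F) Phi = cyclotomic z n.
  rewrite -map_poly_comp -(cyclo_map prim_z); apply: eq_map_poly => b /=.
  by rewrite rmorph_int.
have [-> | nzP] := eqVneq P 0; first by rewrite rmorph0 root0.
pose g := gcdp P Phi.
have [[u1 u2] /= Eu] := Bezoutp P Phi.
have rootg : root (map_poly (ratr : rat -> F) g) z.
  have : (u1 * P + u2 * Phi) %| g by rewrite (eqp_dvdl _ Eu) dvdpp.
  case/dvdpP => h ->.
  rewrite rmorphM rmorphD !rmorphM /= rootM; apply/orP; right.
  rewrite /root hornerD !hornerM (eqP rootP) PhiF.
  by move: (root_cyclotomic prim_z z); rewrite prim_z /root => /eqP ->; rewrite !mulr0 addr0.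
have g_gt1 : (1 < size g)%N.
  rewrite ltnNge; apply/negP => /size1_polyC Dg.
  move: rootg; rewrite Dg map_polyC /= rootC fmorph_eq0 => /eqP g00.
  have : g == 0 by rewrite Dg g00.
  by rewrite gcdp_eq0 (negbTE nzP).
have [w rootw] : exists w : algC, root (map_poly ratr g) w.
  apply/closed_rootP; rewrite size_map_poly neq_ltn g_gt1 orbT //.
have dvdgPhi : g %| Phi by apply: dvdp_gcdr.
have rootPhiw : root (map_poly (ratr : rat -> algC) Phi) w.
  move: dvdgPhi; rewrite -(dvdp_map (ratr : {rmorphism rat -> algC})).
  case/dvdpP => h ->; by rewrite rootM rootw orbT.
have [w0 prim_w0] := C_prim_root_exists n_gt0.
have PhiC : map_poly (ratr : rat -> algC) Phi = cyclotomic w0 n.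
  rewrite -map_poly_comp -(Cintr_Cyclotomic prim_w0); apply: eq_map_poly => b /=.
  by rewrite rmorph_int.
have prim_w : n.-primitive_root w by rewrite -(root_cyclotomic prim_w0) -PhiC.
have [p0 [Dp0 _] dvp0] := minCpolyP w.
have Ep0 : p0 = Phi.
  have inj := map_inj_poly (fmorph_inj (ratr : {rmorphism rat -> algC})) (rmorph0 _).
  apply: inj.
  transitivity (minCpoly w); first exact: (esym Dp0).
  rewrite (minCpoly_cyclotomic prim_w) -(Cintr_Cyclotomic prim_w) -map_poly_comp.
  by apply: eq_map_poly => b /=; rewrite rmorph_int.
have : Phi %| P by rewrite -Ep0 (dvdp_trans _ (dvdp_gcdl P Phi)) // -dvp0.
case/dvdpP => h ->; rewrite rmorphM rootM.
suff H : root (map_poly ratr Phi) (z ^+ j) by apply/orP; right; exact: H.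
by rewrite PhiF root_cyclotomic // prim_root_exp_coprime.
Qed.
Local Open Scope complex_scope.
Section Expi.
Variable R : realType.
Implicit Types a b : R.

Lemma expiD a b : expi (a + b) = expi a * expi b.
Proof.
rewrite /expi cosD sinD; apply/eqP; rewrite eq_complex /=; apply/andP; split;
  apply/eqP; ring.
Qed.

Lemma expi0 : expi (0 : R) = 1.
Proof. by rewrite /expi cos0 sin0. Qed.

Lemma expiMn (n : nat) a : expi (n%:R * a) = expi a ^+ n.
Proof.
elim: n => [|n IH]; first by rewrite mul0r expi0 expr0.
by rewrite -addn1 natrD mulrDl mul1r expiD IH exprD expr1.
Qed.

Lemma expi2pi : expi (2 * pi : R) = 1.
Proof. by rewrite /expi mulr_natl cos2pi sin2pi. Qed.

Lemma expi_neq1 (t : R) : 0 < t < 2 * pi -> expi t != 1.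
Proof.
case/andP => t0 t2; apply/negP => /eqP E.
have : sin t = 0 by move: E; rewrite /expi => -[_ ->].
have : cos t = 1 by move: E; rewrite /expi => -[-> _].
have [tpi|tpi|->] := ltgtP t pi.
- by move=> _ s0; have := @sin_gt0_pi R t ltac:(by rewrite t0 tpi); rewrite s0 ltxx.
- move=> _ s0.
  have : sin (t - pi + pi) = - sin (t - pi) by rewrite sinDpi.
  rewrite subrK s0 => /esym/eqP; rewrite oppr_eq0 => /eqP s0'.
  have h : 0 < t - pi < pi.
    by rewrite subr_gt0 tpi /= ltrBlDr -mulr2n -mulr_natl.
  by have := sin_gt0_pi h; rewrite s0' ltxx.
- by rewrite cospi => /eqP; rewrite -subr_eq0 -opprD oppr_eq0 (pnatr_eq0 _ 2).
Qed.

Lemma zeta_prim (n : nat) : (0 < n)%N -> n.-primitive_root (expi (2 * pi / n%:R) : R[i]).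
Proof.
move=> n_gt0.
have nz : (n%:R : R) != 0 by rewrite pnatr_eq0 -lt0n.
have pi0 : (0 : R) < 2 * pi by rewrite mulr_gt0 ?pi_gt0.
have zn : (expi (2 * pi / n%:R) : R[i]) ^+ n = 1.
  by rewrite -expiMn mulrC divfK // expi2pi.
have [m prim_m dvd] := prim_order_exists n_gt0 zn.
have m_gt0 := prim_order_gt0 prim_m.
suff E : m = n by move: prim_m; rewrite E.
apply/eqP; rewrite eqn_leq dvdn_leq // leqNgt; apply/negP => mn.
have := prim_expr_order prim_m; rewrite -expiMn; apply/eqP/expi_neq1.
apply/andP; split.
  by rewrite mulr_gt0 ?ltr0n ?divr_gt0 ?ltr0n.
rewrite mulrCA gtr_pMr // ltr_pdivrMr ?ltr0n // mul1r ltr_nat //.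
Qed.
End Expi.
Lemma ortho (F : fieldType) n (eta : F) m : n.-primitive_root eta ->
  \sum_(0 <= k < n) eta ^+ (k * m) = if (n %| m)%N then n%:R else 0.
Proof.
move=> prim.
have n_gt0 := prim_order_gt0 prim.
rewrite big_mkord.
under eq_bigr => k _ do rewrite mulnC exprM.
case: ifP => dv.
  have -> : eta ^+ m = 1 by apply/eqP; rewrite -(prim_order_dvd prim).
  by rewrite (eq_bigr (fun _ => 1)) ?sumr_const ?card_ord // => k _; rewrite expr1n.
have ne1 : eta ^+ m != 1 by rewrite -(prim_order_dvd prim) dv.
have := subrX1 (eta ^+ m) n.
rewrite -exprM mulnC exprM (prim_expr_order prim) expr1n subrr => /esym/eqP.
by rewrite mulf_eq0 subr_eq0 (negbTE ne1) /= => /eqP.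
Qed.

Lemma dvd_shift n d t : (d < n)%N -> (t < n)%N -> (n %| d + (n - t))%N = (d == t).
Proof.
move=> dn tn.
case: (leqP t d) => td.
  have -> : (d + (n - t) = n + (d - t))%N by lia.
  rewrite dvdn_addr // .
  case: eqP => [->|ne]; first by rewrite subnn dvdn0.
  apply/negP => /dvdn_leq; have : (0 < d - t)%N by lia.
  move=> h /(_ h); lia.
have -> : (d == t) = false by apply/negP => /eqP; lia.
apply/negP => /dvdn_leq; have : (0 < d + (n - t))%N by lia.
move=> h /(_ h); lia.
Qed.
Definition epr (R : realType) (n : nat) : R[i] := expi (2 * pi / n%:R).

Lemma cardR (C : numDomainType) (T : finType) (A : {set T}) (P : pred T) :
  \sum_(x in A) ((P x)%:R : C) = #|[set x in A | P x]|%:R.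
Proof.
rewrite -sum1_card natr_sum big_mkcond /= [RHS]big_mkcond /=.
by apply: eq_bigr => x _; rewrite inE; case: (x \in A); case: (P x).
Qed.

Lemma dotZ_lt n (u a : Z2 n) : (1 < n)%N -> (dotZ u a < n)%N.
Proof. by move=> n1; rewrite /dotZ -[X in (_ < X)%N](Zp_cast n1) ltn_ord. Qed.

Lemma sum_option (T : finType) (F : option T -> nat) :
  \sum_(k : option T) F k = F None + \sum_(k : T) F (Some k).
Proof.
rewrite (bigD1 None) //=; congr (_ + _)%N.
rewrite (reindex_omap Some id) //=; first by apply: eq_bigl => j; rewrite eqxx.
by case.
Qed.

Definition dz n (u a : Z2 n) : 'Z_n := u.1 * a.1 + u.2 * a.2.
Definition dv n (k : option 'Z_n) : Z2 n :=
  match k with None => (0, 1) | Some k => (1, k) end.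

Lemma Zp_unit n (x : 'Z_n) : prime n -> x != 0 -> x \is a GRing.unit.
Proof.
move=> pn x0; have n1 := prime_gt1 pn.
rewrite -[x]natr_Zp unitZpE // prime_coprime //; apply/negP => /dvdn_leq.
have xp : (0 < x)%N.
  by rewrite lt0n; apply: contraNneq x0 => h; rewrite -val_eqE /= h.
move/(_ xp); rewrite leqNgt -[X in (_ < X)%N](Zp_cast n1) ltn_ord.
by [].
Qed.

Lemma card_Zn n : (1 < n)%N -> #|'Z_n| = n.
Proof. by move=> n1; rewrite card_ord Zp_cast. Qed.

Lemma dir_count n (a b : Z2 n) : prime n ->
  (\sum_(k : option 'Z_n) (dz (dv k) a == dz (dv k) b) = if a == b then n.+1 else 1)%N.
Proof.
move=> pn; have n1 := prime_gt1 pn.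
rewrite sum_option /dz /=.
case: a b => [a1 a2] [b1 b2] /=.
have [e2|ne2] := eqVneq a2 b2.
  rewrite !mul0r !add0r !mul1r e2 eqxx /=.
  under eq_bigr => k _ do rewrite (inj_eq (addIr _)).
  rewrite sum_nat_const (card_Zn n1) xpair_eqE eqxx andbT.
  by case: (a1 == b1); rewrite ?muln1 ?muln0.
rewrite !mul0r !add0r !mul1r (negbTE ne2) /=.
have u : (a2 - b2) \is a GRing.unit by apply: Zp_unit; rewrite // subr_eq0.
have -> : (a1, a2) == (b1, b2) = false by rewrite xpair_eqE (negbTE ne2) andbF.
rewrite (eq_bigr (fun k => (k == (b1 - a1) / (a2 - b2)) : nat)).
  by rewrite (bigD1 ((b1 - a1) / (a2 - b2))) //= eqxx big1 // => k /negbTE ->.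
move=> k _; congr nat_of_bool.
apply/eqP/eqP => [E|->].
  apply: (mulIr u); rewrite divrK //.
  apply/eqP; rewrite -subr_eq0; apply/eqP.
  transitivity ((a1 + k * a2) - (b1 + k * b2)); first ring.
  by rewrite E subrr.
have h := divrK u (b1 - a1); set c := _ / _ in h *.
apply/eqP; rewrite -subr_eq0; apply/eqP.
transitivity (a1 - b1 + c * (a2 - b2)); first ring.
by rewrite h; ring.
Qed.

Lemma cardEn (T : finType) (A : {set T}) (P : pred T) :
  #|[set x in A | P x]| = (\sum_(x in A) (P x : nat))%N.
Proof.
rewrite -sum1_card big_mkcond /= [RHS]big_mkcond /=.
by apply: eq_bigr => x _; rewrite inE; case: (x \in A); case: (P x).
Qed.

Lemma point_rec n (T : finType) (A : {set T}) (pi : T -> Z2 n) (b : Z2 n) : prime n ->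
  (\sum_(k : option 'Z_n) #|[set x in A | dz (dv k) (pi x) == dz (dv k) b]|
   = #|A| + n * #|[set x in A | pi x == b]|)%N.
Proof.
move=> pn.
under eq_bigr => k _ do rewrite cardEn.
rewrite exchange_big /=.
under eq_bigr => x _ do rewrite dir_count //.
rewrite cardEn big_distrr /= -sum1_card -big_split /=.
by apply: eq_bigr => x _; case: (pi x == b); rewrite ?muln1 ?muln0 ?addn0 ?add1n.
Qed.

Lemma dir_pair n (X : {set Z2 n}) (k : option 'Z_n) : (1 < n)%N -> (n < #|X|)%N ->
  exists y y' : Z2 n, [/\ y \in X, y' \in X, y != y' &
    exists c : 'Z_n, y.1 - y'.1 = c * (dv k).1 /\ y.2 - y'.2 = c * (dv k).2].
Proof.
move=> n1 nX.
pose f (y : Z2 n) : 'Z_n := match k with None => y.1 | Some k => y.2 - k * y.1 end.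
have : ~~ [forall y : Z2 n, forall y' : Z2 n,
            [&& y \in X, y' \in X & f y == f y'] ==> (y == y')].
  apply/negP => /forallP H.
  have inj : {in X &, injective f}.
    move=> y y' yX y'X e; apply/eqP; have := forallP (H y) y'.
    by rewrite yX y'X e eqxx.
  have := card_in_imset inj; have := max_card (f @: X); rewrite card_Zn // => le E.
  by move: nX; rewrite -E ltnNge le.
case/forallPn => y /forallPn [y']; rewrite negb_imply => /andP[/and3P[yX y'X /eqP e] ne].
exists y, y'; split => //.
rewrite /f in e; clear f; case: k e => [k|] /= e.
  exists (y.1 - y'.1); split; first by rewrite mulr1.
  apply/eqP; rewrite -subr_eq0; apply/eqP.
  transitivity ((y.2 - k * y.1) - (y'.2 - k * y'.1)); first ring.
  by rewrite e subrr.
exists (y.2 - y'.2); split; first by rewrite e subrr mulr0.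
by rewrite mulr1.
Qed.
Section K.
Variables (R : realType) (p q : nat).
Hypotheses (pp : prime p) (qp : prime q) (pnq : p != q).

Lemma p_gt0 : (0 < p)%N. Proof. exact: prime_gt0. Qed.
Lemma q_gt0 : (0 < q)%N. Proof. exact: prime_gt0. Qed.

Lemma chiE (w x : Gpq p q) :
  chi R w x = epr R p ^+ dotZ w.1 x.1 * epr R q ^+ dotZ w.2 x.2.
Proof.
have p0 : (p%:R : R) != 0 by rewrite pnatr_eq0 -lt0n p_gt0.
have q0 : (q%:R : R) != 0 by rewrite pnatr_eq0 -lt0n q_gt0.
rewrite /chi /epr -!expiMn -expiD; congr expi; field.
by rewrite p0 q0.
Qed.

Lemma ze_powq : epr R (p * q) ^+ q = epr R p.
Proof.
have p0 : (p%:R : R) != 0 by rewrite pnatr_eq0 -lt0n p_gt0.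
have q0 : (q%:R : R) != 0 by rewrite pnatr_eq0 -lt0n q_gt0.
rewrite /epr -expiMn natrM; congr expi; field; by rewrite p0 q0.
Qed.

Lemma ze_powp : epr R (p * q) ^+ p = epr R q.
Proof.
have p0 : (p%:R : R) != 0 by rewrite pnatr_eq0 -lt0n p_gt0.
have q0 : (q%:R : R) != 0 by rewrite pnatr_eq0 -lt0n q_gt0.
rewrite /epr -expiMn natrM; congr expi; field; by rewrite p0 q0.
Qed.

Lemma epr_prim n : (0 < n)%N -> n.-primitive_root (epr R n).
Proof. exact: zeta_prim. Qed.


Lemma cop_pq : coprime p q.
Proof. by rewrite prime_coprime // dvdn_prime2 //. Qed.

Lemma Sh_zero (A : {set Gpq p q}) (w : Gpq p q) (k k' : nat) :
  chiS R w A = 0 -> (0 < k < p)%N -> (0 < k' < q)%N ->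
  \sum_(x in A) epr R p ^+ (k * dotZ w.1 x.1) * epr R q ^+ (k' * dotZ w.2 x.2) = 0.
Proof.
move=> S0 /andP[k0 kp] /andP[k'0 k'q].
pose j := chinese p q k k'.
have jp : (j %% p = k %% p)%N := chinese_modl cop_pq k k'.
have jq : (j %% q = k' %% q)%N := chinese_modr cop_pq k k'.
have coj : coprime j (p * q).
  rewrite coprimeMr -(coprime_modl j p) -(coprime_modl j q) jp jq.
  rewrite !coprime_modl ![coprime _ p]coprime_sym ![coprime _ q]coprime_sym.
  rewrite !prime_coprime //; apply/andP; split; apply/negP => /dvdn_leq.
    by move/(_ k0); rewrite leqNgt kp.
  by move/(_ k'0); rewrite leqNgt k'q.
have pq0 : (0 < p * q)%N by rewrite muln_gt0 p_gt0 q_gt0.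
have prim := epr_prim pq0.
pose P : {poly rat} := \sum_(x in A) 'X^(q * dotZ w.1 x.1 + p * dotZ w.2 x.2).
have mapP : map_poly (ratr : rat -> R[i]) P =
    \sum_(x in A) 'X^(q * dotZ w.1 x.1 + p * dotZ w.2 x.2).
  by rewrite rmorph_sum; apply: eq_bigr => x _; rewrite rmorphXn /= map_polyX.
have rootP : root (map_poly (ratr : rat -> R[i]) P) (epr R (p * q)).
  rewrite mapP /root horner_sum; apply/eqP; transitivity (chiS R w A); last exact: S0.
  rewrite /chiS; apply: eq_bigr => x _.
  by rewrite hornerXn chiE exprD !exprM ze_powq ze_powp.
have := galois_root prim coj rootP.
rewrite mapP /root horner_sum => /eqP H; rewrite -[RHS]H; apply: eq_bigr => x _.
have ep1 : epr R p ^+ p = 1 by apply: prim_expr_order; apply: epr_prim; exact: p_gt0.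
have eq1 : epr R q ^+ q = 1 by apply: prim_expr_order; apply: epr_prim; exact: q_gt0.
rewrite hornerXn -exprM mulnDr exprD !mulnA ![(j * _)%N]mulnC -!mulnA !exprM.
rewrite ze_powq ze_powp -!exprM.
rewrite -[in RHS](expr_mod _ ep1) -modnMml jp modnMml (expr_mod _ ep1).
by rewrite -[in RHS](expr_mod _ eq1) -modnMml jq modnMml (expr_mod _ eq1).
Qed.


Lemma ortho_eq n (eta : R[i]) d t : n.-primitive_root eta -> (d < n)%N -> (t < n)%N ->
  \sum_(0 <= k < n) eta ^+ (k * (d + (n - t))) = (d == t)%:R * n%:R.
Proof.
move=> prim dn tn; rewrite ortho // dvd_shift //.
by case: (d == t); rewrite ?mul1r ?mul0r.
Qed.

Lemma Kmain (A : {set Gpq p q}) (w : Gpq p q) : chiS R w A = 0 ->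
  forall t s, (t < p)%N -> (s < q)%N ->
  (p * #|[set x in A | dotZ w.1 x.1 == t]| + q * #|[set x in A | dotZ w.2 x.2 == s]|
   = p * q * #|[set x in A | (dotZ w.1 x.1 == t) && (dotZ w.2 x.2 == s)]| + #|A|)%N.
Proof.
move=> S0 t s tp sq.
have p1 : (1 < p)%N by apply: prime_gt1.
have q1 : (1 < q)%N by apply: prime_gt1.
set ep := epr R p; set eq := epr R q.
have primp : p.-primitive_root ep by apply: epr_prim; exact: p_gt0.
have primq : q.-primitive_root eq by apply: epr_prim; exact: q_gt0.
pose d1 x := dotZ w.1 (x : Gpq p q).1; pose d2 x := dotZ w.2 (x : Gpq p q).2.
have d1lt x : (d1 x < p)%N by apply: dotZ_lt.
have d2lt x : (d2 x < q)%N by apply: dotZ_lt.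
pose Sh k k' := \sum_(x in A) ep ^+ (k * d1 x) * eq ^+ (k' * d2 x).
pose G k k' := ep ^+ (k * (p - t)) * eq ^+ (k' * (q - s)) * Sh k k'.
pose T := \sum_(0 <= k < p) \sum_(0 <= k' < q) G k k'.
have T1 : T = \sum_(x in A) (\sum_(0 <= k < p) ep ^+ (k * (d1 x + (p - t)))) *
                            (\sum_(0 <= k' < q) eq ^+ (k' * (d2 x + (q - s)))).
  rewrite /T /G /Sh.
  under eq_bigr => k _ do under eq_bigr => k' _ do rewrite big_distrr /=.
  under eq_bigr => k _ do rewrite exchange_big /=.
  rewrite exchange_big /=; apply: eq_bigr => x _.
  rewrite big_distrlr /=; apply: eq_bigr => k _; apply: eq_bigr => k' _.
  rewrite !mulnDr !exprD; ring.
have T1' : T = (p * q * #|[set x in A | (dotZ w.1 x.1 == t) && (dotZ w.2 x.2 == s)]|)%:R.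
  rewrite T1 (eq_bigr (fun x => ((d1 x == t) && (d2 x == s))%:R * (p * q)%:R)).
    by rewrite -big_distrl /= cardR mulrC -natrM.
  move=> x _; rewrite !ortho_eq // natrM.
  by case: (d1 x == t); case: (d2 x == s); rewrite /= ?mul1r ?mul0r ?mulr0 ?mul1r.
have T2 : T + G 0%N 0%N = \sum_(0 <= k' < q) G 0%N k' + \sum_(0 <= k < p) G k 0%N.
  rewrite /T big_ltn ?p_gt0 // [X in _ = _ + X]big_ltn ?p_gt0 // -addrA; congr (_ + _).
  rewrite addrC; congr (_ + _).
  rewrite !big_nat; apply: eq_bigr => k /andP[k0 kp].
  rewrite big_ltn ?q_gt0 // big_nat big1 ?addr0 // => k' /andP[k'0 k'q].
  by rewrite /G /Sh Sh_zero ?mulr0 // ?k0 ?kp ?k'0 ?k'q.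
have G00 : G 0%N 0%N = #|A|%:R.
  rewrite /G /Sh !mul0n !expr0 !mul1r -sum1_card natr_sum.
  by apply: eq_bigr => x _; rewrite ?mulr1 ?mul1r.
have G0 : \sum_(0 <= k' < q) G 0%N k' = (q * #|[set x in A | dotZ w.2 x.2 == s]|)%:R.
  rewrite /G /Sh.
  under eq_bigr => k' _ do rewrite mul0n expr0 mul1r big_distrr /=.
  rewrite exchange_big /= (eq_bigr (fun x => (d2 x == s)%:R * q%:R)).
    by rewrite -big_distrl /= cardR mulrC -natrM.
  move=> x _; rewrite -(ortho_eq primq) //; apply: eq_bigr => k' _.
  by rewrite mul1r -exprD -mulnDr addnC.
have Gk0 : \sum_(0 <= k < p) G k 0%N = (p * #|[set x in A | dotZ w.1 x.1 == t]|)%:R.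
  rewrite /G /Sh.
  under eq_bigr => k _ do rewrite mul0n expr0 mulr1 big_distrr /=.
  rewrite exchange_big /= (eq_bigr (fun x => (d1 x == t)%:R * p%:R)).
    by rewrite -big_distrl /= cardR mulrC -natrM.
  move=> x _; rewrite -(ortho_eq primp) //; apply: eq_bigr => k _.
  by rewrite mulr1 -exprD -mulnDr addnC.
apply/eqP; rewrite -(eqr_nat R[i]) !natrD -T1' -G00 T2 G0 Gk0 addrC.
by [].
Qed.


Lemma val_addZ n (a b : 'Z_n) : (1 < n)%N -> nat_of_ord (a + b) = ((a + b) %% n)%N.
Proof.
move=> n1; have -> : a + b = ((a + b)%N%:R : 'Z_n) by rewrite natrD !natr_Zp.
by rewrite val_Zp_nat.
Qed.

Definition om (a : 'Z_p) (b : 'Z_q) : R[i] := epr R p ^+ a * epr R q ^+ b.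

Lemma omD a a' b b' : om (a + a') (b + b') = om a b * om a' b'.
Proof.
have p1 : (1 < p)%N by apply: prime_gt1.
have q1 : (1 < q)%N by apply: prime_gt1.
have ep1 : epr R p ^+ p = 1 by apply: prim_expr_order; apply: epr_prim; exact: p_gt0.
have eq1 : epr R q ^+ q = 1 by apply: prim_expr_order; apply: epr_prim; exact: q_gt0.
rewrite /om !val_addZ // !(expr_mod _ ep1) !(expr_mod _ eq1) !exprD.
by rewrite -!mulrA; congr (_ * _); rewrite mulrCA.
Qed.

Lemma chi_om (w x : Gpq p q) : chi R w x = om (dz w.1 x.1) (dz w.2 x.2).
Proof. by rewrite chiE. Qed.

Definition gz : Gpq p q := ((0, 0), (0, 0)).

Lemma chi_sum_diag (S : {set Gpq p q}) (l l' : Gpq p q) :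
  \sum_(s in S) chi R l s * chi R (gsub gz l') s = chiS R (gsub l l') S.
Proof.
rewrite /chiS; apply: eq_bigr => s _; rewrite !chi_om -omD; congr om.
  by rewrite /dz /=; ring.
by rewrite /dz /=; ring.
Qed.

Lemma chi_sum_diag2 (L : {set Gpq p q}) (s s' : Gpq p q) :
  \sum_(l in L) chi R (gsub gz l) s * chi R l s' = chiS R (gsub s' s) L.
Proof.
rewrite /chiS; apply: eq_bigr => l _; rewrite !chi_om -omD; congr om.
  by rewrite /dz /=; ring.
by rewrite /dz /=; ring.
Qed.

Lemma chiS_zero (S : {set Gpq p q}) (l : Gpq p q) : chiS R (gsub l l) S = #|S|%:R.
Proof.
rewrite /chiS -sum1_card natr_sum; apply: eq_bigr => s _.
rewrite chi_om /dz /= !subrr !mul0r !addr0.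
by rewrite /om expr0 mulr1.
Qed.


Lemma sum_nth (T : Type) (x0 : T) (r : seq T) n (F : T -> R[i]) :
  size r = n -> \sum_(i < n) F (nth x0 r i) = \sum_(x <- r) F x.
Proof. by move=> <-; rewrite (big_nth x0) big_mkord. Qed.

Lemma dual (S L : {set Gpq p q}) : spectral_pair R S L ->
  forall s s', s \in S -> s' \in S -> s != s' -> chiS R (gsub s s') L = 0.
Proof.
move=> [eqSL spec] s s' sS s'S ne.
set n := #|S|.
pose eS := enum S; pose eL := enum L.
have szS : size eS = n by rewrite -cardE.
have szL : size eL = n by rewrite -cardE -eqSL.
pose A : 'M[R[i]]_n := \matrix_(i, j) chi R (nth s eL i) (nth s eS j).
pose B : 'M[R[i]]_n := \matrix_(i, j) chi R (gsub gz (nth s eL j)) (nth s eS i).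
have AB : A *m B = (n%:R : R[i])%:M.
  apply/matrixP => i i'; rewrite !mxE.
  rewrite (eq_bigr (fun j : 'I_n => (fun x => chi R (nth s eL i) x * chi R (gsub gz (nth s eL i')) x) (nth s eS j))); last by move=> j _; rewrite !mxE.
  rewrite (@sum_nth _ s eS n (fun x => chi R (nth s eL i) x * chi R (gsub gz (nth s eL i')) x) szS) big_enum /= chi_sum_diag.
  have [<-|nei] := eqVneq i i'; first by rewrite chiS_zero mulr1n.
  rewrite mulr0n; apply: spec.
  - by rewrite -mem_enum mem_nth // szL.
  - by rewrite -mem_enum mem_nth // szL.
  - by rewrite nth_uniq ?szL // enum_uniq.
have n0 : (n%:R : R[i]) != 0 by rewrite pnatr_eq0 -lt0n card_gt0; apply/set0Pn; exists s.
have BA : B *m A = (n%:R : R[i])%:M.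
  have H : (n%:R^-1 *: A) *m B = 1%:M.
    by rewrite -scalemxAl AB scale_scalar_mx mulVf.
  have := mulmx1C H; rewrite -scalemxAr => /(congr1 (fun M => n%:R *: M)).
  by rewrite scalerA divff // scale1r scale_scalar_mx mulr1.
have is' : (index s' eS < n)%N by rewrite -szS index_mem mem_enum.
have is_ : (index s eS < n)%N by rewrite -szS index_mem mem_enum.
have := congr1 (fun M : 'M[R[i]]_n => M (Ordinal is') (Ordinal is_)) BA; rewrite !mxE /=.
rewrite (eq_bigr (fun i : 'I_n => (fun x => chi R (gsub gz x) s' * chi R x s) (nth s eL i))); last first.
  by move=> i _; rewrite !mxE /= !nth_index ?mem_enum.
rewrite (@sum_nth _ s eL n (fun x => chi R (gsub gz x) s' * chi R x s) szL) big_enum /= chi_sum_diag2 => ->.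
have -> : (Ordinal is' == Ordinal is_) = false.
  apply/negP => /eqP [] /(congr1 (nth s eS)); rewrite !nth_index ?mem_enum // => E.
  by move: ne; rewrite E eqxx.
by rewrite mulr0n.
Qed.

End K.
Lemma fiber_card (T1 T2 : finType) (A : {set T1 * T2}) a :
  #|[set b | (a, b) \in A]| = #|[set x in A | x.1 == a]|.
Proof.
have inj : injective (pair a : T2 -> T1 * T2) by move=> b b' [].
rewrite -(card_imset _ inj); apply: eq_card => -[a' b]; rewrite inE.
apply/imsetP/andP => [[b' ] |[xA /eqP /= e]].
  by rewrite inE => H [-> ->]; split.
by exists b; rewrite ?inE -?e.
Qed.

Lemma card_fibers (T1 T2 : finType) (A : {set T1 * T2}) :
  #|A| = (\sum_(a : T1) #|[set x in A | x.1 == a]|)%N.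
Proof.
rewrite -sum1_card.
under [RHS]eq_bigr => a _ do rewrite cardEn.
rewrite [RHS]exchange_big /=; apply: eq_bigr => x _.
rewrite (bigD1 x.1) //= eqxx big1 // => a /negbTE; rewrite eq_sym => -> //.
Qed.

Section M.
Variables (R : realType) (p q : nat).
Hypotheses (pp : prime p) (qp : prime q) (pnq : p != q).

Lemma FB (A : {set Gpq p q}) (Y : {set Z2 q}) : ~~ (q ^ 2 %| #|A|)%N ->
  (forall y y', y \in Y -> y' \in Y -> y != y' ->
     chiS R (((0, 0), (y.1 - y'.1, y.2 - y'.2)) : Gpq p q) A = 0) ->
  (#|Y| <= q)%N.
Proof.
move=> nq2 H; rewrite leqNgt; apply/negP => qY.
have p1 : (1 < p)%N by apply: prime_gt1.
have q1 : (1 < q)%N by apply: prime_gt1.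
have key : forall (k : option 'Z_q) (t : 'Z_q),
    (q * #|[set x in A | dz (dv k) x.2 == t]| = #|A|)%N.
  move=> k t.
  have [y [y' [yY y'Y ne [c [e1 e2]]]]] := dir_pair k q1 qY.
  have c0 : c != 0.
    apply: contraNneq ne => c0; move: e1 e2; rewrite c0 !mul0r.
    case: y y' {yY y'Y} => [y1 y2] [y1' y2'] /= /eqP; rewrite subr_eq0 => /eqP -> /eqP.
    by rewrite subr_eq0 => /eqP ->.
  have cu := Zp_unit qp c0.
  have sq : (nat_of_ord (c * t)%R < q)%N by rewrite -[X in (_ < X)%N](Zp_cast q1) ltn_ord.
  have := Kmain pp qp pnq (H y y' yY y'Y ne) p1 sq.
  set w : Gpq p q := ((0, 0), (y.1 - y'.1, y.2 - y'.2)).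
  rewrite (_ : #|[set x in A | _ & _]| = 0%N); last first.
    by apply/eqP; rewrite cards_eq0; apply/eqP/setP => x; rewrite !inE /dotZ /= andbF.
  rewrite muln0 add0n muln0 add0n => <-; congr (_ * _)%N.
  apply: eq_card => x; rewrite !inE; congr (_ && _).
  rewrite /dotZ val_eqE.
  have -> : w.2.1 * x.2.1 + w.2.2 * x.2.2 = c * dz (dv k) x.2.
    by rewrite /= e1 e2 /dz; ring.
  by rewrite (inj_eq (mulrI cu)).
have PR := point_rec A (fun x : Gpq p q => x.2) (0, 0) qp.
have : (q * (#|A| + q * #|[set x in A | x.2 == (0%R, 0%R)]|) = q.+1 * #|A|)%N.
  rewrite -PR big_distrr /=.
  rewrite (eq_bigr (fun _ => #|A|)); last by move=> k _; rewrite key.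
  by rewrite big_const iter_addn_0 card_option card_Zn // mulnC.

move=> E.
move/negP: nq2; apply; apply/dvdnP; exists #|[set x in A | x.2 == (0%R, 0%R)]|.
move: E; rewrite mulnDr mulSn [(#|A| + _)%N]addnC => /eqP; rewrite eqn_add2l => /eqP <-.
by rewrite -mulnn mulnA mulnC.
Qed.


Lemma fiber_sum_bound (A : {set Gpq p q}) m :
  (forall a, #|[set b | (a, b) \in A]| <= m)%N ->
  (#|A| <= m * #|[set x.1 | x in A]|)%N.
Proof.
move=> H.
rewrite (card_fibers A) (eq_bigr (fun a => if a \in [set x.1 | x in A]
    then #|[set x in A | x.1 == a]| else 0%N)); last first.
  move=> a _; case: ifP => // /negP nA; apply/eqP; rewrite cards_eq0; apply/eqP/setP => x.
  rewrite !inE; apply/negP => /andP[xA /eqP e]; apply: nA; rewrite -e.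
  by apply: imset_f.
rewrite -big_mkcond /= mulnC -sum_nat_const; apply: leq_sum => a _.
by rewrite -fiber_card.
Qed.

Theorem main (S L : {set Gpq p q}) :
  spectral_pair R S L ->
  gcdn #|S| (p ^ 2 * q ^ 2)%N = (p * q)%N ->
  (p * q < #|S|)%N ->
  exists D : {set Z2 p},
    [/\ D != set0, D != setT & forall a : Z2 p, Sproj S a = (q * (a \in D))%N].
Proof.
move=> spec gcdE big.
have [eqSL specL] := spec.
have p1 : (1 < p)%N by apply: prime_gt1.
have q1 : (1 < q)%N by apply: prime_gt1.
have p0 : (0 < p)%N by apply: prime_gt0.
have q0 : (0 < q)%N by apply: prime_gt0.
have pqN : (p * q %| #|S|)%N by rewrite -gcdE dvdn_gcdl.
have qN : (q %| #|S|)%N := dvdn_trans (dvdn_mull p (dvdnn q)) pqN.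
have nq2 : ~~ (q ^ 2 %| #|S|)%N.
  apply/negP => h.
  have : (q ^ 2 %| p * q)%N by rewrite -gcdE dvdn_gcd h dvdn_mull.
  rewrite -mulnn dvdn_pmul2r // dvdn_prime2 // => /eqP e.
  by move: pnq; rewrite e eqxx.
have np2 : ~~ (p ^ 2 %| #|S|)%N.
  apply/negP => h.
  have : (p ^ 2 %| p * q)%N by rewrite -gcdE dvdn_gcd h dvdn_mulr.
  rewrite -mulnn dvdn_pmul2l // dvdn_prime2 // => /eqP e.
  by move: pnq; rewrite e eqxx.
have copqp : coprime q p by rewrite coprime_sym prime_coprime // dvdn_prime2.
have fibL : forall a : Z2 p, (#|[set b | (a, b) \in L]| <= q)%N.
  move=> a; apply: (FB (A := S)) => // y y'; rewrite !inE => yL y'L ne.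
  have := specL (a, y) (a, y') yL y'L; rewrite xpair_eqE eqxx /= => /(_ ne).
  by rewrite /gsub /= !subrr.
have bigL : (p < #|[set x.1 | x in L]|)%N.
  have := fiber_sum_bound fibL; rewrite -eqSL => h.
  by rewrite -(ltn_pmul2l q0); apply: leq_trans h; rewrite mulnC.
have fibS : forall a : Z2 p, (Sproj S a <= q)%N.
  move=> a; apply: (FB (A := L)); first by rewrite -eqSL.
  move=> y y'; rewrite !inE => yS y'S ne.
  have := dual pp qp spec yS y'S; rewrite xpair_eqE eqxx /= => /(_ ne).
  by rewrite /gsub /= !subrr.
have lines : forall (k : option 'Z_p) (t : 'Z_p),
    (q %| #|[set x in S | dz (dv k) x.1 == t]|)%N.
  move=> k t.
  have [y [y' [yL y'L ne [c [e1 e2]]]]] := dir_pair k p1 bigL.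
  have c0 : c != 0.
    apply: contraNneq ne => c0; move: e1 e2; rewrite c0 !mul0r.
    case: y y' {yL y'L} => [y1 y2] [y1' y2'] /= /eqP; rewrite subr_eq0 => /eqP -> /eqP.
    by rewrite subr_eq0 => /eqP ->.
  have cu := Zp_unit pp c0.
  case/imsetP: yL => l lL El; case/imsetP: y'L => l' l'L El'.
  have nel : l != l' by apply: contraNneq ne => e; rewrite El El' e.
  have tp : (nat_of_ord (c * t)%R < p)%N by rewrite -[X in (_ < X)%N](Zp_cast p1) ltn_ord.
  have := Kmain pp qp pnq (specL l l' lL l'L nel) tp q0.
  set X := #|[set x in S | dotZ _ _ == _]|.
  move=> E.
  have : (q %| p * X)%N.
    have : (q %| p * X + q * #|[set x in S | dotZ (gsub l l').2 x.2 == 0%N]|)%N.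
      by rewrite E dvdn_add // mulnC mulnA dvdn_mull.
    by rewrite dvdn_addl // dvdn_mulr.
  rewrite Gauss_dvdr //; congr (_ %| _)%N; rewrite /X; apply: eq_card => x.
  rewrite !inE; congr (_ && _); rewrite /dotZ val_eqE.
  have -> : (gsub l l').1.1 * x.1.1 + (gsub l l').1.2 * x.1.2 = c * dz (dv k) x.1.
    by rewrite /gsub /= -El -El' e1 e2 /dz; ring.
  by rewrite (inj_eq (mulrI cu)).
have divS : forall a : Z2 p, (q %| Sproj S a)%N.
  move=> a; have PR := point_rec S (fun x : Gpq p q => x.1) a pp.
  have : (q %| #|S| + p * #|[set x in S | x.1 == a]|)%N.
    by rewrite -PR dvdn_sum // => k _; apply: lines.
  rewrite dvdn_addr // Gauss_dvdr // /Sproj => h.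
  by rewrite (fiber_card S a).
have val01 : forall a : Z2 p, Sproj S a = (q * (Sproj S a != 0%N))%N.
  move=> a; case: eqP => [->|ne]; first by rewrite muln0.
  rewrite muln1; apply/eqP; rewrite eqn_leq fibS dvdn_leq //.
  by rewrite lt0n; apply/eqP.
exists [set a | Sproj S a != 0%N]; split.
- apply/negP => /eqP D0.
  have : #|S| = 0%N.
    rewrite (card_fibers S) big1 // => a _; rewrite -fiber_card.
    have : a \notin [set a | Sproj S a != 0%N] by rewrite D0 inE.
    by rewrite inE negbK => /eqP.
  by move=> S0; move: big; rewrite S0.
- apply/negP => /eqP DT.
  have : #|S| = (q * (p * p))%N.
    rewrite (card_fibers S) (eq_bigr (fun _ => q)).
      by rewrite big_const iter_addn_0 card_prod card_Zn // mulnC.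
    move=> a _; rewrite -fiber_card; have := val01 a.
    have : a \in [set a | Sproj S a != 0%N] by rewrite DT inE.
    by rewrite inE /Sproj => /negbTE ->; rewrite muln1.
  by move=> E; move/negP: np2; apply; rewrite E -mulnn dvdn_mull.
- by move=> a; rewrite inE -val01.
Qed.

End M.

Local Close Scope complex_scope.
Local Close Scope ring_scope.

Theorem corollary4p8 (R : realType) (p q : nat) (S L : {set Gpq p q}) :
  prime p -> prime q -> p != q ->
  spectral_pair R S L ->
  gcdn #|S| (p ^ 2 * q ^ 2) = p * q ->
  p * q < #|S| ->
  exists D : {set Z2 p},
    [/\ D != set0, D != setT & forall a : Z2 p, Sproj S a = q * (a \in D)].
Proof. by move=> pp qp pnq; apply: (main pp qp pnq). Qed.
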